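(* Let $G$ be a finite group and $C_2$ the cyclic group of order $2$. Suppose that every torsion unit of $V(\mathbb{Z}G)$ is conjugate within $\mathbb{Q}G$ to an element of $G$. Then every torsion unit of $V(\mathbb{Z}[G \times C_2])$ is conjugate within $\mathbb{Q}[G \times C_2]$ to an element of $G \times C_2$.
   Context: For a finite group $H$, $V(\mathbb{Z}H)$ denotes the group of units of augmentation $1$ of the integral group ring $\mathbb{Z}H$, where the augmentation of $\sum_h \alpha_h h$ is $\sum_h \alpha_h$. A torsion unit is a unit of finite order. ''Conjugate within $\mathbb{Q}H$'' means conjugate by a unit of the rational group algebra $\mathbb{Q}H$. *)

(* Defs.v *)
(* Integral/rational group rings of a finite group, as
   finitely supported (here: total) coefficient functions {ffun gT -> R}
   with the convolution product. *)
From HB Require Import structures.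
From mathcomp Require Import all_boot all_order all_algebra all_fingroup all_solvable.
Set Implicit Arguments. Unset Strict Implicit. Unset Printing Implicit Defensive.
Import GRing.Theory.
Local Open Scope ring_scope.

Section GroupRing.
Variables (R : nzRingType) (gT : finGroupType).

Definition grElt := {ffun gT -> R}.

Definition gr_mul (a b : grElt) : grElt :=
  [ffun g => \sum_(h : gT) a h * b (h^-1 * g)%g].

Definition gr_of (x : gT) : grElt := [ffun g => (g == x)%:R].

Definition gr_one : grElt := gr_of 1%g.

Definition gr_exp (a : grElt) (n : nat) : grElt := iter n (gr_mul a) gr_one.

Definition gr_aug (a : grElt) : R := \sum_(g : gT) a g.

Definition gr_unit (a : grElt) : Prop :=
  exists b : grElt, gr_mul a b = gr_one /\ gr_mul b a = gr_one.

Definition gr_torsion (a : grElt) : Prop :=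
  exists2 n : nat, (0 < n)%N & gr_exp a n = gr_one.

End GroupRing.

Definition gr_ZtoQ (gT : finGroupType) (a : grElt int gT) : grElt rat gT :=
  [ffun g => (a g)%:~R].

Definition in_VZ (gT : finGroupType) (a : grElt int gT) : Prop :=
  gr_unit a /\ gr_aug a = 1.

Definition QG_conj_to_group (gT : finGroupType) (a : grElt int gT) : Prop :=
  exists (u v : grElt rat gT) (g : gT),
    [/\ gr_mul u v = gr_one rat gT, gr_mul v u = gr_one rat gT &
        gr_mul (gr_mul v (gr_ZtoQ a)) u = gr_of rat g].

Definition torsion_units_rationally_trivial (gT : finGroupType) : Prop :=
  forall a : grElt int gT, in_VZ a -> gr_torsion a -> QG_conj_to_group a.

(* Main.v *)
Require Import Defs.
From HB Require Import structures.
From mathcomp Require Import all_boot all_order all_algebra all_fingroup all_solvable.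
From mathcomp Require Import ring lra zify.
Set Implicit Arguments. Unset Strict Implicit. Unset Printing Implicit Defensive.
Import GRing.Theory.
Local Open Scope ring_scope.
Definition o0 : 'I_2 := ord0.
Definition o1 : 'I_2 := ord_max.
Lemma i00 : (o0^-1 * o0)%g = o0. Proof. exact: val_inj. Qed.
Lemma i01 : (o0^-1 * o1)%g = o1. Proof. exact: val_inj. Qed.
Lemma i10 : (o1^-1 * o0)%g = o1. Proof. exact: val_inj. Qed.
Lemma i11 : (o1^-1 * o1)%g = o0. Proof. exact: val_inj. Qed.
Lemma pairMV (gT : finGroupType) (h g : gT) (j k : 'I_2) :
  ((h, j)^-1 * (g, k))%g = ((h^-1 * g)%g, (j^-1 * k)%g).
Proof. by []. Qed.
Lemma sum2 (R : nzRingType) (F : 'I_2 -> R) : \sum_(i : 'I_2) F i = F o0 + F o1.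
Proof. by rewrite big_ord_recr big_ord1 /=; congr (F _ + _); apply: val_inj. Qed.
Lemma sumH (R : nzRingType) (gT : finGroupType) (F : gT * 'I_2 -> R) :
  \sum_(p : gT * 'I_2) F p = \sum_(h : gT) (F (h, o0) + F (h, o1)).
Proof.
rewrite (eq_bigr (fun p => F (p.1, p.2))); last by case.
by rewrite -(pair_bigA _ (fun h j => F (h, j))) /=; apply: eq_bigr => h _; rewrite sum2.
Qed.
Lemma I2_cases (i : 'I_2) : i = o0 \/ i = o1.
Proof. by case: i => [[|[|]]] // Hi; [left|right]; apply: val_inj. Qed.
Lemma gr_mulE (R : nzRingType) (gT : finGroupType) (a b : grElt R gT) g :
  gr_mul a b g = \sum_(h : gT) a h * b (h^-1 * g)%g.
Proof. by rewrite /gr_mul ffunE. Qed.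
Lemma gr_mulE2 (R : nzRingType) (gT : finGroupType) (a b : grElt R gT) g :
  gr_mul a b g = \sum_(h : gT) a (g * h^-1)%g * b h.
Proof.
rewrite gr_mulE (reindex_inj (mulgI g^-1)%g) /=.
Abort.
Lemma gr_mulA (R : nzRingType) (gT : finGroupType) (a b c : grElt R gT) :
  gr_mul (gr_mul a b) c = gr_mul a (gr_mul b c).
Proof.
apply/ffunP => g; rewrite !gr_mulE.
under eq_bigr => h _ do rewrite gr_mulE mulr_suml.
rewrite exchange_big /=; apply: eq_bigr => k _.
rewrite gr_mulE mulr_sumr.
rewrite (reindex_inj (mulgI k)) /=.
by apply: eq_bigr => l _; rewrite mulKg invMg -mulgA mulrA.
Qed.
Lemma gr_mul1l (R : nzRingType) (gT : finGroupType) (a : grElt R gT) :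
  gr_mul (gr_one R gT) a = a.
Proof.
apply/ffunP => g; rewrite gr_mulE (bigD1 1%g) //= big1 ?addr0.
  by rewrite /gr_one /gr_of ffunE eqxx mul1r invg1 mul1g.
by move=> h /negbTE; rewrite /gr_one /gr_of ffunE => ->; rewrite mul0r.
Qed.
Lemma gr_mul1r (R : nzRingType) (gT : finGroupType) (a : grElt R gT) :
  gr_mul a (gr_one R gT) = a.
Proof.
apply/ffunP => g; rewrite gr_mulE (bigD1 g) //= big1 ?addr0.
  by rewrite /gr_one /gr_of ffunE mulVg eqxx mulr1.
move=> h hg; rewrite /gr_one /gr_of ffunE.
case: eqP => [/eqP|]; last by rewrite mulr0.
by rewrite -(inj_eq (mulgI h)) mulKVg mulg1 eq_sym (negbTE hg).
Qed.
Lemma gr_augM (R : nzRingType) (gT : finGroupType) (a b : grElt R gT) :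
  gr_aug (gr_mul a b) = gr_aug a * gr_aug b.
Proof.
rewrite /gr_aug mulr_suml.
under eq_bigr => g _ do rewrite gr_mulE.
rewrite exchange_big /=; apply: eq_bigr => h _.
rewrite mulr_sumr (reindex_inj (mulgI h)) /=.
by apply: eq_bigr => k _; rewrite mulKg.
Qed.
Lemma gr_ofM (R : nzRingType) (gT : finGroupType) (x y : gT) :
  gr_mul (gr_of R x) (gr_of R y) = gr_of R (x * y)%g.
Proof.
apply/ffunP => g; rewrite gr_mulE (bigD1 x) //= big1 ?addr0.
  rewrite /gr_of !ffunE eqxx mul1r.
  by rewrite -(inj_eq (mulgI x)) mulKVg.
by move=> h /negbTE; rewrite /gr_of ffunE => ->; rewrite mul0r.
Qed.
Lemma gr_expD (R : nzRingType) (gT : finGroupType) (a : grElt R gT) m n :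
  gr_exp a (m + n) = gr_mul (gr_exp a m) (gr_exp a n).
Proof.
elim: m => [|m IH]; first by rewrite add0n /gr_exp /= gr_mul1l.
by rewrite addSn /gr_exp /= -/(gr_exp a _) IH gr_mulA.
Qed.
Definition pm (R : comNzRingType) (gT : finGroupType) (s : R)
  (x : grElt R ((gT * 'I_2)%type)) : grElt R gT := [ffun g => x (g, o0) + s * x (g, o1)].

Lemma pmM (R : comNzRingType) (gT : finGroupType) (s : R) (hs : s * s = 1)
  (x y : grElt R ((gT * 'I_2)%type)) : pm s (gr_mul x y) = gr_mul (pm s x) (pm s y).
Proof.
apply/ffunP => g; rewrite !ffunE !sumH mulr_sumr -big_split /=.
apply: eq_bigr => h _; rewrite !ffunE !pairMV i00 i01 i10 i11.
set x0 := x (h, o0); set x1 := x (h, o1).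
set y0 := y (_, o0); set y1 := y (_, o1).
rewrite -[x1 * y1]mul1r -{1}hs; ring.
Qed.

Lemma intu (e f : int) : e * f = 1 -> e = 1 \/ e = -1.
Proof. move=> h.
have hu : e \is a intUnitRing.unitz by apply: (@intUnitRing.unitzPl _ f); rewrite mulrC.
move: hu. lia.
Qed.

Lemma pm_of0 (R : comNzRingType) (gT : finGroupType) (s : R) (k : gT) :
  pm s (gr_of R (k, o0)) = gr_of R k.
Proof.
have e: (o1 == o0) = false by [].
by apply/ffunP => g; rewrite !ffunE !xpair_eqE eqxx andbT /= e andbF mulr0 addr0.
Qed.

Definition gsc (R : nzRingType) (gT : finGroupType) (c : R) (a : grElt R gT) : grElt R gT :=
  [ffun g => c * a g].

Lemma pm_of1 (R : comNzRingType) (gT : finGroupType) (s : R) (k : gT) :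
  pm s (gr_of R (k, o1)) = gsc s (gr_of R k).
Proof.
have e: (o0 == o1) = false by [].
apply/ffunP => g; rewrite !ffunE !xpair_eqE eqxx andbT /= e andbF; rewrite (_ : false%:R = 0) // add0r.
by []. Qed.

Lemma pm_one (R : comNzRingType) (gT : finGroupType) (s : R) :
  pm s (gr_one R (gT * 'I_2)%type) = gr_one R gT.
Proof. exact: pm_of0. Qed.

Lemma pm_exp (R : comNzRingType) (gT : finGroupType) (s : R) (hs : s * s = 1)
  (x : grElt R (gT * 'I_2)%type) n : pm s (gr_exp x n) = gr_exp (pm s x) n.
Proof.
elim: n => [|n IH]; first exact: pm_one.
by rewrite /gr_exp /= -!/(gr_exp _ _) pmM // IH.
Qed.

Lemma pm_ZtoQ (gT : finGroupType) (s : int) (x : grElt int (gT * 'I_2)%type) :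
  pm (s%:~R) (gr_ZtoQ x) = gr_ZtoQ (pm s x).
Proof. by apply/ffunP => g; rewrite !ffunE intrD intrM. Qed.

Lemma pm_aug (R : comNzRingType) (gT : finGroupType) (x : grElt R (gT * 'I_2)%type) :
  gr_aug (pm 1 x) = gr_aug x.
Proof. by rewrite /gr_aug sumH; apply: eq_bigr => g _; rewrite ffunE mul1r. Qed.

Lemma pm_inj (gT : finGroupType) (x y : grElt rat (gT * 'I_2)%type) :
  pm 1 x = pm 1 y -> pm (-1) x = pm (-1) y -> x = y.
Proof.
move=> /ffunP h1 /ffunP h2; apply/ffunP => [[g i]].
move: (h1 g) (h2 g); rewrite !ffunE => e1 e2.
case: (I2_cases i) => ->; lra.
Qed.

Definition Lift (gT : finGroupType) (u w : grElt rat gT) : grElt rat (gT * 'I_2)%type :=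
  [ffun p => if p.2 == o0 then (u p.1 + w p.1) / 2 else (u p.1 - w p.1) / 2].

Lemma pmLift1 (gT : finGroupType) (u w : grElt rat gT) : pm 1 (Lift u w) = u.
Proof. apply/ffunP => g; have e: (o1 == o0) = false by []. rewrite !ffunE /=; lra. Qed.

Lemma pmLift2 (gT : finGroupType) (u w : grElt rat gT) : pm (-1) (Lift u w) = w.
Proof. apply/ffunP => g; have e: (o1 == o0) = false by []. rewrite !ffunE /=; lra. Qed.
Lemma gsc_mull (R : comNzRingType) (gT : finGroupType) (c : R) (a b : grElt R gT) :
  gr_mul (gsc c a) b = gsc c (gr_mul a b).
Proof.
apply/ffunP => g; rewrite !ffunE mulr_sumr; apply: eq_bigr => h _.
by rewrite ffunE mulrA.
Qed.

Lemma gsc_mulr (R : comNzRingType) (gT : finGroupType) (c : R) (a b : grElt R gT) :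
  gr_mul a (gsc c b) = gsc c (gr_mul a b).
Proof.
apply/ffunP => g; rewrite !ffunE mulr_sumr; apply: eq_bigr => h _.
by rewrite ffunE mulrCA.
Qed.

Lemma gsc_gsc (R : comNzRingType) (gT : finGroupType) (c d : R) (a : grElt R gT) :
  gsc c (gsc d a) = gsc (c * d) a.
Proof. by apply/ffunP => g; rewrite !ffunE mulrA. Qed.

Lemma gsc1 (R : comNzRingType) (gT : finGroupType) (a : grElt R gT) : gsc 1 a = a.
Proof. by apply/ffunP => g; rewrite !ffunE mul1r. Qed.

Lemma gsc_exp (R : comNzRingType) (gT : finGroupType) (c : R) (a : grElt R gT) n :
  gr_exp (gsc c a) n = gsc (c ^+ n) (gr_exp a n).
Proof.
elim: n => [|n IH]; first by rewrite expr0 gsc1.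
by rewrite /gr_exp /= -!/(gr_exp _ _) IH gsc_mull gsc_mulr gsc_gsc exprS.
Qed.

Lemma gsc_aug (R : comNzRingType) (gT : finGroupType) (c : R) (a : grElt R gT) :
  gr_aug (gsc c a) = c * gr_aug a.
Proof. by rewrite /gr_aug mulr_sumr; apply: eq_bigr => g _; rewrite ffunE. Qed.

Lemma ZtoQ_gsc (gT : finGroupType) (c : int) (a : grElt int gT) :
  gr_ZtoQ (gsc c a) = gsc (c%:~R) (gr_ZtoQ a).
Proof. by apply/ffunP => g; rewrite !ffunE intrM. Qed.

Lemma aug_one (R : nzRingType) (gT : finGroupType) : gr_aug (gr_one R gT) = 1.
Proof.
rewrite /gr_aug (bigD1 1%g) //= big1 ?addr0; first by rewrite ffunE eqxx.
by move=> h /negbTE; rewrite ffunE => ->.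
Qed.

Definition pa (R : nzRingType) (gT : finGroupType) (C : {set gT}) (a : grElt R gT) : R :=
  \sum_(h in C) a h.

Lemma paE (R : nzRingType) (gT : finGroupType) (C : {set gT}) (a b : grElt R gT) :
  pa C (gr_mul a b) = \sum_h \sum_k (if (h * k)%g \in C then a h * b k else 0).
Proof.
rewrite /pa; under eq_bigr => c _ do rewrite ffunE.
rewrite exchange_big /=; apply: eq_bigr => h _.
rewrite big_mkcond (reindex_inj (mulgI h)) /=.
by apply: eq_bigr => k _; rewrite mulKg.
Qed.

Lemma pa_comm (R : comNzRingType) (gT : finGroupType) (C : {set gT})
  (hC : forall h k : gT, ((h * k)%g \in C) = ((k * h)%g \in C)) (a b : grElt R gT) :
  pa C (gr_mul a b) = pa C (gr_mul b a).
Proof.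
rewrite !paE exchange_big; apply: eq_bigr => h _; apply: eq_bigr => k _.
by rewrite hC mulrC.
Qed.

Lemma pa_conj (R : comNzRingType) (gT : finGroupType) (C : {set gT})
  (hC : forall h k : gT, ((h * k)%g \in C) = ((k * h)%g \in C)) (u v x y : grElt R gT) :
  gr_mul u v = gr_one R gT -> gr_mul (gr_mul v x) u = y -> pa C y = pa C x.
Proof. by move=> uv <-; rewrite pa_comm // -gr_mulA uv gr_mul1l. Qed.

Lemma pa_of (R : nzRingType) (gT : finGroupType) (C : {set gT}) (g : gT) :
  pa C (gr_of R g) = (g \in C)%:R.
Proof.
rewrite /pa big_mkcond (bigD1 g) //= big1 ?addr0.
  by rewrite ffunE eqxx; case: (g \in C).
by move=> h /negbTE hg; rewrite ffunE hg; case: (h \in C).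
Qed.

Lemma pa_ZtoQ (gT : finGroupType) (C : {set gT}) (a : grElt int gT) :
  pa C (gr_ZtoQ a) = (pa C a)%:~R.
Proof. by rewrite /pa rmorph_sum; apply: eq_bigr => g _; rewrite ffunE. Qed.

Lemma pa_gsc (R : comNzRingType) (gT : finGroupType) (C : {set gT}) (c : R) (a : grElt R gT) :
  pa C (gsc c a) = c * pa C a.
Proof. by rewrite /pa mulr_sumr; apply: eq_bigr => g _; rewrite ffunE. Qed.

Lemma pa_pm (gT : finGroupType) (C : {set gT}) (x : grElt int (gT * 'I_2)%type) :
  pa C (pm 1 x) - pa C (pm (-1) x) = 2 * \sum_(h in C) x (h, o1).
Proof.
rewrite /pa -sumrB mulr_sumr; apply: eq_bigr => h _; rewrite !ffunE; ring.
Qed.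

Lemma class_comm (gT : finGroupType) (g : gT) (h k : gT) :
  ((h * k)%g \in (g ^: [set: gT])%g) = ((k * h)%g \in (g ^: [set: gT])%g).
Proof.
have J : forall x z : gT, x \in (g ^: [set: gT])%g -> (x ^ z)%g \in (g ^: [set: gT])%g.
  by move=> x z /imsetP [y _ ->]; rewrite -conjgM memJ_class ?inE.
apply/idP/idP => H.
  by rewrite (_ : (k * h = (h * k) ^ h)%g) ?J // conjgE mulgA mulKg.
by rewrite (_ : (h * k = (k * h) ^ k)%g) ?J // conjgE mulgA mulKg.
Qed.

Lemma conj_shift (R : nzRingType) (gT : finGroupType) (u v a : grElt R gT) (g y : gT) :
  gr_mul u v = gr_one R gT -> gr_mul v u = gr_one R gT ->
  gr_mul (gr_mul v a) u = gr_of R (g ^ y)%g ->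
  exists u' v', [/\ gr_mul u' v' = gr_one R gT, gr_mul v' u' = gr_one R gT &
                    gr_mul (gr_mul v' a) u' = gr_of R g].
Proof.
move=> uv vu E.
exists (gr_mul u (gr_of R y^-1)%g), (gr_mul (gr_of R y) v); split.
- rewrite gr_mulA -(gr_mulA (gr_of R _)) gr_ofM mulVg.
  by rewrite [gr_of R 1]/(gr_one R gT) gr_mul1l uv.
- rewrite gr_mulA -(gr_mulA v) vu gr_mul1l gr_ofM mulgV //.
- have ->: gr_of R g = gr_mul (gr_mul (gr_of R y) (gr_of R (g ^ y)%g)) (gr_of R y^-1)%g.
    by rewrite !gr_ofM conjgE !mulgA mulgV mul1g mulgK.
  by rewrite -E !gr_mulA.
Qed.

Lemma rat11 : (1 : rat) * 1 = 1. Proof. by rewrite mulr1. Qed.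
Lemma ratm1 : (-1 : rat) * (-1) = 1. Proof. by rewrite mulrNN mulr1. Qed.
Lemma intrm1 : ((-1 : int)%:~R : rat) = -1. Proof. by rewrite rmorphN1. Qed.

Lemma pm_ZtoQ1 (gT : finGroupType) (X : grElt int (gT * 'I_2)%type) :
  pm 1 (gr_ZtoQ X) = gr_ZtoQ (pm 1 X).
Proof. by rewrite -pm_ZtoQ. Qed.

Lemma pm_ZtoQm1 (gT : finGroupType) (X : grElt int (gT * 'I_2)%type) :
  pm (-1) (gr_ZtoQ X) = gr_ZtoQ (pm (-1) X).
Proof. by rewrite -pm_ZtoQ intrm1. Qed.

Lemma assemble (gT : finGroupType) (X : grElt int (gT * 'I_2)%type)
  (u1 v1 u2 v2 : grElt rat gT) (g : gT) (t : 'I_2) :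
  gr_mul u1 v1 = gr_one rat gT -> gr_mul v1 u1 = gr_one rat gT ->
  gr_mul (gr_mul v1 (gr_ZtoQ (pm 1 X))) u1 = gr_of rat g ->
  gr_mul u2 v2 = gr_one rat gT -> gr_mul v2 u2 = gr_one rat gT ->
  gr_mul (gr_mul v2 (gr_ZtoQ (pm (-1) X))) u2 = pm (-1) (gr_of rat (g, t)) ->
  QG_conj_to_group X.
Proof.
move=> uv1 vu1 E1 uv2 vu2 E2.
exists (Lift u1 u2), (Lift v1 v2), (g, t); split; apply: pm_inj;
  rewrite ?(pmM rat11) ?(pmM ratm1) ?pm_one ?pmLift1 ?pmLift2 //.
- rewrite pm_ZtoQ1 E1; case: (I2_cases t) => ->; by rewrite ?pm_of0 ?pm_of1 ?gsc1.
- by rewrite pm_ZtoQm1 E2.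
Qed.

Theorem proposition2 (gT : finGroupType) :
  torsion_units_rationally_trivial gT ->
  torsion_units_rationally_trivial (gT * 'I_2)%type.
Proof.
move=> hyp X [[Y [XY YX]] augX] [n n0 Xn].
have h1 : (1 : int) * 1 = 1 by [].
have hm1 : (-1 : int) * (-1) = 1 by [].
set xp := pm 1 X.
have Vp : in_VZ xp.
  split; last by rewrite pm_aug.
  by exists (pm 1 Y); rewrite -!(pmM h1) XY YX pm_one.
have Tp : gr_torsion xp by exists n => //; rewrite -pm_exp // Xn pm_one.
have [u1 [v1 [g [uv1 vu1 E1]]]] := hyp _ Vp Tp.
set xm := pm (-1) X.
have unm : gr_mul xm (pm (-1) Y) = gr_one int gT by rewrite -(pmM hm1) XY pm_one.
have unm' : gr_mul (pm (-1) Y) xm = gr_one int gT by rewrite -(pmM hm1) YX pm_one.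
set e := gr_aug xm.
have he : e * gr_aug (pm (-1) Y) = 1 by rewrite -gr_augM unm aug_one.
have ee : e * e = 1 by case: (intu he) => ->.
set xm' := gsc e xm.
have xmE : xm = gsc e xm' by rewrite /xm' gsc_gsc ee gsc1.
have Vm : in_VZ xm'.
  split; last by rewrite gsc_aug ee.
  exists (gsc e (pm (-1) Y)); rewrite /xm'.
  by split; rewrite gsc_mull gsc_mulr gsc_gsc ee gsc1; [exact: unm | exact: unm'].
have Tm : gr_torsion xm'.
  exists (n + n)%N; first by rewrite addn_gt0 n0.
  rewrite gsc_exp exprD -exprMn ee expr1n gsc1 gr_expD /xm -pm_exp // Xn pm_one.
  exact: gr_mul1l.
have [u2 [v2 [h [uv2 vu2 E2]]]] := hyp _ Vm Tm.
set C := (g ^: [set: gT])%g.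
have pa1 : pa C xp = 1.
  apply: (@intr_inj rat).
  by rewrite -pa_ZtoQ -(pa_conj (class_comm g) uv1 E1) pa_of class_refl.
have hC : h \in C.
  apply/negPn/negP => hn.
  have pam : pa C xm' = 0.
    apply: (@intr_inj rat).
    by rewrite -pa_ZtoQ -(pa_conj (class_comm g) uv2 E2) pa_of (negbTE hn).
  have := pa_pm C X; rewrite -/xp -/xm pa1 xmE pa_gsc pam mulr0 subr0.
  lia.
move: hC => /imsetP [y _ hy]; rewrite hy in E2.
have [u2' [v2' [uv2' vu2' E2']]] := conj_shift uv2 vu2 E2.
have E3 : gr_mul (gr_mul v2' (gr_ZtoQ xm)) u2' = gsc (e%:~R) (gr_of rat g).
  by rewrite xmE ZtoQ_gsc gsc_mulr gsc_mull E2'.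
case: (intu he) => he1; rewrite he1 in E3.
- apply: (assemble (t := o0) uv1 vu1 E1 uv2' vu2').
  by rewrite E3 pm_of0 gsc1.
- apply: (assemble (t := o1) uv1 vu1 E1 uv2' vu2').
  by rewrite E3 pm_of1 intrm1.
Qed.
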